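(* For an integer $d\geq2$ and $\mu,\nu\in[0,1]$ define $$f_d(\mu,\nu)=(d-2)(\mu+\nu-\mu\nu)+\mu^2+\nu^2,\qquad g_d(\mu,\nu)=2(d-2)(\mu+\nu-\mu\nu)-d(\mu^2+\nu^2)+3.$$ Then for every $d\geq2$ and all $\mu,\nu\in[0,1]$, the inequality $f_d(\mu,\nu)>d-1$ implies both $g_d(\mu,\nu)<d-1$ and $\mu+\nu>1$. For $d=2$ the converse also holds: if $g_2(\mu,\nu)<1$ and $\mu+\nu>1$ then $f_2(\mu,\nu)>1$. For every $d\geq3$ the converse fails: there exist $\mu,\nu\in[0,1]$ with $\mu+\nu>1$ and $g_d(\mu,\nu)<d-1$ but $f_d(\mu,\nu)\leq d-1$.
   Context: Interpretation (not needed for the claim): for noisy versions $\mu|\varphi_x\rangle\langle\varphi_x|+(1-\mu)I/d$ and $\nu|\psi_y\rangle\langle\psi_y|+(1-\nu)I/d$ of two measurements in mutually unbiased bases of $\mathbb{C}^d$, $f_d>d-1$ characterizes usefulness for $(2,d)$-QRAC and, given $\mu+\nu>1$, $g_d<d-1$ characterizes incompatibility. *)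

(* Defs.v *)
From Stdlib Require Import Reals Lra.
Open Scope R_scope.

Definition f_d (d : nat) (mu nu : R) : R :=
  (INR d - 2) * (mu + nu - mu * nu) + mu ^ 2 + nu ^ 2.

Definition g_d (d : nat) (mu nu : R) : R :=
  2 * (INR d - 2) * (mu + nu - mu * nu) - INR d * (mu ^ 2 + nu ^ 2) + 3.

(* Main.v *)
Require Import Defs.
From Stdlib Require Import Reals Lra Psatz.
Open Scope R_scope.

Theorem proposition4 :
  (forall (d : nat) (mu nu : R), (2 <= d)%nat ->
     0 <= mu <= 1 -> 0 <= nu <= 1 ->
     f_d d mu nu > INR d - 1 ->
     g_d d mu nu < INR d - 1 /\ mu + nu > 1)
  /\
  (forall mu nu : R, 0 <= mu <= 1 -> 0 <= nu <= 1 ->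
     g_d 2 mu nu < 1 -> mu + nu > 1 -> f_d 2 mu nu > 1)
  /\
  (forall d : nat, (3 <= d)%nat ->
     exists mu nu : R, 0 <= mu <= 1 /\ 0 <= nu <= 1 /\
       mu + nu > 1 /\ g_d d mu nu < INR d - 1 /\ f_d d mu nu <= INR d - 1).
Proof.
  split; [|split].
  - intros d mu nu Hd Hm Hn Hf.
    assert (HD : 2 <= INR d) by (replace 2 with (INR 2) by (simpl; lra); apply le_INR; exact Hd).
    unfold f_d, g_d in *.
    set (D := INR d) in *.
    assert (Ht : mu + nu - mu * nu <= 1) by (assert (0 <= (1-mu)*(1-nu)) by (apply Rmult_le_pos; lra); nra).
    assert (Ht0 : 0 <= mu + nu - mu * nu) by (assert (mu*nu <= mu) by nra; nra).
    split.
    + assert (Hq : mu^2 + nu^2 > D - 1 - (D - 2) * (mu + nu - mu * nu)) by lra.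
      assert (H1 : D * (mu^2 + nu^2) >= D * (D - 1 - (D - 2) * (mu + nu - mu * nu))).
      { apply Rle_ge, Rmult_le_compat_l; lra. }
      assert (H2 : (D*D - 4) * (mu + nu - mu * nu) <= (D*D - 4) * 1).
      { apply Rmult_le_compat_l; nra. }
      nra.
    + destruct (Rle_lt_dec (mu + nu) 1) as [Hs|Hs]; [|lra].
      exfalso.
      assert (mu^2 + nu^2 <= 1) by nra.
      assert ((D - 2) * (mu + nu - mu * nu) <= D - 2) by nra.
      lra.
  - intros mu nu Hm Hn Hg Hs. unfold f_d, g_d in *. simpl in *. lra.
  - intros d Hd.
    assert (HD : 3 <= INR d) by (replace 3 with (INR 3) by (simpl; lra); apply le_INR; exact Hd).
    exists (7/10), (7/10).
    unfold f_d, g_d. set (D := INR d) in *.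
    repeat split; lra.
Qed.
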